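(* Let $n,p\ge1$. For each $i\in\{1,\dots,n\}$, $\lambda_i(\delta_{(n,p)})=0$, and for each $j\in\{1,\dots,p\}$, $\rho_j(\delta_{(n,p)})=0$.
   Context: Work over a field of characteristic $0$. $F_{(m,q)}$ is the Lie algebra generated by $x_{i,j}$, $(i,j)\in\{1,\dots,m\}\times\{1,\dots,q\}$, with defining relations $[x_{i,j},x_{i',j'}]=0$ whenever $i\ne i'$ and $j\ne j'$ (quotient of the free Lie algebra); it is graded by total degree ($\deg x_{i,j}=1$) and $\widehat F_{(m,q)}$ is its completion. $\lambda_i:\widehat F_{(n,p)}\to\widehat F_{(n-1,p)}$ is the continuous Lie algebra morphism with $x_{i',j'}\mapsto x_{i',j'}$ if $i'<i$, $\mapsto0$ if $i'=i$, $\mapsto x_{i'-1,j'}$ if $i'>i$; $\rho_j:\widehat F_{(n,p)}\to\widehat F_{(n,p-1)}$ is the continuous Lie morphism with $x_{i',j'}\mapsto x_{i',j'}$ if $j'<j$, $\mapsto0$ if $j'=j$, $\mapsto x_{i',j'-1}$ if $j'>j$. For elements of positive valuation, $y_1\star\cdots\star y_N$ denotes the Campbell–Baker–Hausdorff series with $\exp(y_1\star\cdots\star y_N)=\exp(y_1)\cdots\exp(y_N)$ (empty product $=0$). Define $$\delta_{(n,p)}=\sum_{k=0}^n\sum_{l=0}^p\sum_{\substack{1\le i_1<\cdots<i_k\le n\\1\le j_1<\cdots<j_l\le p}}(-1)^{n+p-k-l}(x_{i_1,j_1}\star\cdots\star x_{i_1,j_l})\star\cdots\star(x_{i_k,j_1}\star\cdots\star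 x_{i_k,j_l})\in\widehat{F}_{(n,p)}.$$ *)

(* Defs.v *)
From HB Require Import structures.
From Stdlib Require Import Relation_Operators.
From mathcomp Require Import all_boot all_order all_algebra.
From mathcomp Require Import boolp.
Set Implicit Arguments. Unset Strict Implicit. Unset Printing Implicit Defensive.
Import Order.TTheory GRing.Theory.
Local Open Scope ring_scope.

(* Letters x_{i,j} of F_(m,q) are indexed (0-based) by 'I_m * 'I_q.
   A (completed) series is a function from words to coefficients; this is the
   completed free associative algebra on the letters, in which the completed
   Lie algebras and the CBH series live. *)
Definition letter (m q : nat) := ('I_m * 'I_q)%type.
Definition word (m q : nat) := seq (letter m q).
Definition ser (R : fieldType) (m q : nat) := word m q -> R.

Section Series.
Variables (R : fieldType) (m q : nat).
Local Notation S := (ser R m q).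

Definition sadd (f g : S) : S := fun w => f w + g w.
Definition sscale (c : R) (f : S) : S := fun w => c * f w.
Definition sone : S := fun w => (w == [::])%:R.
Definition smul (f g : S) : S :=
  fun w => \sum_(k < (size w).+1) f (take k w) * g (drop k w).
Definition spow (f : S) (k : nat) : S := iter k (smul f) sone.
(* exp f = sum_k f^k/k! ; for f without constant term only k <= |w|
   contribute to the coefficient of w. *)
Definition sexp (f : S) : S :=
  fun w => \sum_(k < (size w).+1) spow f k w / (k`!)%:R.
(* log g = sum_{k>=1} (-1)^(k+1) (g-1)^k / k, for g with constant term 1 *)
Definition slog (g : S) : S :=
  let h := sadd g (sscale (-1) sone) in
  fun w => \sum_(1 <= k < (size w).+1) (-1) ^+ k.+1 * spow h k w / k%:R.
(* y_1 * ... * y_N (CBH): log (exp y_1 ... exp y_N); empty product = 0 *)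
Definition star (ys : seq S) : S :=
  slog (foldr (fun y acc => smul (sexp y) acc) sone ys).
Definition gen (a : 'I_m) (b : 'I_q) : S := fun w => (w == [:: (a, b)])%:R.

Definition commute_letters (a b : letter m q) : bool :=
  (a.1 != b.1) && (a.2 != b.2).
Definition swap_step (u v : word m q) : Prop :=
  exists s t a b, commute_letters a b /\ u = s ++ a :: b :: t /\ v = s ++ b :: a :: t.
Definition trace_eq (u v : word m q) : Prop := clos_refl_trans _ swap_step u v.

(* Image of a series in the completed enveloping algebra of F_(m,q)
   (free assoc. algebra modulo [x_{i,j},x_{i',j'}] = 0, i<>i', j<>j'),
   whose basis is the set of trace classes: coefficient of the class of w. *)
Definition trace_proj (f : S) : S :=
  fun w => \sum_(v <- permutations w | `[< trace_eq w v >]) f v.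
End Series.

Definition delta (R : fieldType) (n p : nat) : ser R n p :=
  fun w => \sum_(I : {set 'I_n}) \sum_(J : {set 'I_p})
     (-1) ^+ (n + p - #|I| - #|J|) *
     star [seq star [seq gen R i j | j <- enum J] | i <- enum I] w.

(* lambda_i : completed F_(n+1,q) -> F_(n,q), killing row i and shifting
   rows above i down; as continuous algebra morphism on series. *)
Definition lam (R : fieldType) (n q : nat) (i : 'I_n.+1) (f : ser R n.+1 q)
  : ser R n q := fun w => f [seq (lift i ab.1, ab.2) | ab <- w].
(* rho_j : completed F_(m,p+1) -> F_(m,p), killing column j. *)
Definition rho (R : fieldType) (m p : nat) (j : 'I_p.+1) (f : ser R m p.+1)
  : ser R m p := fun w => f [seq (ab.1, lift j ab.2) | ab <- w].

(* Main.v *)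
Require Import Defs.
From mathcomp Require Import all_boot all_order all_algebra.
From mathcomp Require Import boolp.
From mathcomp Require Import zify.
Set Implicit Arguments. Unset Strict Implicit. Unset Printing Implicit Defensive.
Import GRing.Theory.
Local Open Scope ring_scope.

Section PB.
Variables (R : fieldType) (m q m' q' : nat) (phi : letter m' q' -> letter m q).
Definition pb (F : ser R m q) : ser R m' q' := fun w => F (map phi w).

Lemma pb_sone : pb (@sone R m q) = @sone R m' q'.
Proof. by apply: funext => w; rewrite /pb /sone; case: w. Qed.

Lemma pb_smul F G : pb (smul F G) = smul (pb F) (pb G).
Proof.
apply: funext => w; rewrite /pb /smul size_map.
by apply: eq_bigr => k _; rewrite map_take map_drop.
Qed.

Lemma pb_spow F k : pb (spow F k) = spow (pb F) k.
Proof.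
elim: k => [|k IH] /=; first exact: pb_sone.
by rewrite pb_smul IH.
Qed.

Lemma pb_sexp F : pb (sexp F) = sexp (pb F).
Proof.
apply: funext => w; rewrite /pb /sexp size_map.
by apply: eq_bigr => k _; rewrite -pb_spow.
Qed.

Lemma pb_slog F : pb (slog F) = slog (pb F).
Proof.
apply: funext => w; rewrite /pb /slog size_map.
apply: eq_bigr => k _; congr (_ * _ * _).
rewrite -[LHS]/(pb (spow _ k) w) pb_spow; congr (spow _ k w).
by apply: funext => v; rewrite /pb /sadd /sscale -[@sone R m q _]/(pb (@sone R m q) v) pb_sone.
Qed.

Lemma pb_foldr ys : pb (foldr (fun y acc => smul (sexp y) acc) (@sone R m q) ys)
  = foldr (fun y acc => smul (sexp y) acc) (@sone R m' q') (map pb ys).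
Proof.
elim: ys => [|y ys IH] /=; first exact: pb_sone.
by rewrite pb_smul pb_sexp IH.
Qed.

Lemma pb_star ys : pb (star ys) = star (map pb ys).
Proof. by rewrite /star pb_slog pb_foldr. Qed.

End PB.

Section Zero.
Variables (R : fieldType) (m q : nat).
Local Notation S := (ser R m q).
Definition szero : S := fun _ => 0.

Lemma smul0l F : smul szero F = szero.
Proof. by apply: funext => w; rewrite /smul /szero big1 // => k _; rewrite mul0r. Qed.

Lemma spow0 k : spow szero k.+1 = szero.
Proof. by rewrite /spow iterS -/(spow _ _) smul0l. Qed.

Lemma smul1l F : smul (@sone R m q) F = F.
Proof.
apply: funext => w; rewrite /smul big_ord_recl /sone take0 drop0 eqxx mul1r.
rewrite big1 ?addr0 // => k _; case: w k => [|a w] k; first by case: k.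
by rewrite /bump /=  mul0r.
Qed.

Lemma sexp0 : sexp szero = @sone R m q.
Proof.
apply: funext => w; rewrite /sexp big_ord_recl /= divr1.
by rewrite big1 ?addr0 // => k _; rewrite /bump /= smul0l /szero mul0r.
Qed.

Lemma slog1 : slog (@sone R m q) = szero.
Proof.
apply: funext => w; rewrite /slog /szero big_nat big1 // => k /andP[k1 _].
have -> : sadd (@sone R m q) (sscale (-1) (@sone R m q)) = szero.
  by apply: funext => v; rewrite /sadd /sscale /szero mulN1r subrr.
by case: k k1 => // k _; rewrite spow0 /szero mulr0 mul0r.
Qed.

Lemma foldr_filter (T : Type) (G : T -> S) (P : pred T) s :
  (forall x, ~~ P x -> G x = szero) ->
  foldr (fun y acc => smul (sexp y) acc) (@sone R m q) (map G s)
  = foldr (fun y acc => smul (sexp y) acc) (@sone R m q) (map G (filter P s)).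
Proof.
move=> H; elim: s => [|x s IH] //=; case: (boolP (P x)) => Px /=; rewrite IH //.
by rewrite H // sexp0 smul1l.
Qed.

Lemma star_filter (T : Type) (G : T -> S) (P : pred T) s :
  (forall x, ~~ P x -> G x = szero) -> star (map G s) = star (map G (filter P s)).
Proof. by move=> H; rewrite /star (foldr_filter s H). Qed.

Lemma star_zeros (T : Type) (G : T -> S) s :
  (forall x, G x = szero) -> star (map G s) = szero.
Proof.
move=> H; rewrite (star_filter (P := pred0)) //= ?filter_pred0 /star /=.
  exact: slog1.
Qed.
End Zero.

Lemma enum_setD1 (T : finType) (A : {set T}) x : enum (A :\ x) = [seq y <- enum A | y != x].
Proof. by rewrite /enum_mem -filter_predI; apply: eq_filter => y /=; rewrite !inE. Qed.
Definition toggle (T : finType) (i : T) (I : {set T}) := if i \in I then I :\ i else i |: I.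

Lemma toggleK (T : finType) (i : T) : involutive (toggle i).
Proof.
move=> I; rewrite /toggle; case: (boolP (i \in I)) => Hi.
  by rewrite !inE eqxx /= setD1K.
by rewrite setU11 setU1K.
Qed.

Lemma toggleD1 (T : finType) (i : T) (I : {set T}) : toggle i I :\ i = I :\ i.
Proof.
apply/setP => x; rewrite /toggle; case: ifP => Hi; rewrite !inE //.
all: by case: eqP => // ->; rewrite Hi.
Qed.

Lemma card_toggle (T : finType) (i : T) (I : {set T}) :
  if i \in I then #|I| = (#|toggle i I|).+1 else #|toggle i I| = (#|I|).+1.
Proof.
rewrite /toggle; case: ifP => Hi.
  by rewrite (cardsD1 i I) Hi.
by rewrite Hi cardsU1 Hi.
Qed.

Lemma toggle_sum0 (R : fieldType) (T : finType) (i : T) (h : {set T} -> R) :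
  [pchar R] =i pred0 -> (forall I, h (toggle i I) = - h I) -> \sum_I h I = 0.
Proof.
move=> hR Hh.
have HS : \sum_I h I = - \sum_I h I.
  rewrite {1}(reindex_inj (inv_inj (toggleK i))) /= -sumrN.
  by apply: eq_bigr => I _; rewrite Hh.
have : (\sum_I h I) *+ 2 = 0 by rewrite mulr2n {1}HS addNr.
rewrite -mulr_natl => /eqP; rewrite mulf_eq0 => /orP[|/eqP //].
by move: hR => /pcharf0P ->.
Qed.

Lemma sgnS (R : fieldType) (e1 e2 : nat) : e1 = e2.+1 -> (-1) ^+ e1 = - ((-1) ^+ e2 : R).
Proof. by move=> ->; rewrite exprS mulN1r. Qed.

Lemma star_toggle (R : fieldType) (m q : nat) (T : finType) (i : T) (G : T -> ser R m q)
  (I : {set T}) : G i = @szero R m q -> star (map G (enum (toggle i I))) = star (map G (enum I)).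
Proof.
move=> Gi.
have H : forall a, ~~ (a != i) -> G a = @szero R m q by move=> a; rewrite negbK => /eqP ->.
rewrite (star_filter _ H) [in RHS](star_filter _ H) -!enum_setD1 toggleD1 //.
Qed.

Lemma sign_toggle (R : fieldType) (T : finType) (i : T) (I : {set T}) (N b : nat) :
  (#|I| + b <= N)%N -> (#|toggle i I| + b <= N)%N ->
  (-1) ^+ (N - #|toggle i I| - b) = - ((-1) ^+ (N - #|I| - b) : R).
Proof.
move=> h1 h2; have := card_toggle i I; case: ifP => _ Hc.
  by apply: sgnS; lia.
by rewrite (@sgnS R (N - #|I| - b) (N - #|toggle i I| - b)) ?opprK //; lia.
Qed.

Theorem lemma1p5 (R : fieldType) (hR : [pchar R] =i pred0) (n p : nat) :
  (forall (i : 'I_n.+1) (w : word n p.+1),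
      trace_proj (lam i (@delta R n.+1 p.+1)) w = 0) /\
  (forall (j : 'I_p.+1) (w : word n.+1 p),
      trace_proj (rho j (@delta R n.+1 p.+1)) w = 0).
Proof.
have cardI : forall (I : {set 'I_n.+1}), (#|I| <= n.+1)%N.
  by move=> I; rewrite -[X in (_ <= X)%N]card_ord max_card.
have cardJ : forall (I : {set 'I_p.+1}), (#|I| <= p.+1)%N.
  by move=> I; rewrite -[X in (_ <= X)%N]card_ord max_card.
split.
  move=> i w; rewrite /trace_proj big1 // => v _.
  rewrite /lam /delta.
  set phi := fun ab : letter n p.+1 => (lift i ab.1, ab.2).
  have Hpb : forall s1 s2, star [seq star [seq gen R a b | b <- s2] | a <- s1] (map phi v)
     = star [seq star [seq pb phi (gen R a b) | b <- s2] | a <- s1] v.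
    move=> s1 s2; rewrite -[LHS]/(pb phi _ v) pb_star -map_comp; congr (star _ v).
    by apply: eq_map => a /=; rewrite pb_star -map_comp.
  under eq_bigr => I _ do under eq_bigr => J _ do rewrite Hpb.
  refine (@toggle_sum0 R _ i (fun I => _) hR _) => I; rewrite -sumrN; apply: eq_bigr => J _.
  rewrite star_toggle; last first.
    apply: star_zeros => b; apply: funext => u; rewrite /pb /gen /szero.
    case: u => [|x [|y u]] //=; last by rewrite eqseq_cons andbF.
    case: eqP => // [[/eqP]]; by rewrite eq_sym (negbTE (neq_lift _ _)).
  by rewrite sign_toggle ?mulNr //; apply: leq_add.
move=> j w; rewrite /trace_proj big1 // => v _.
rewrite /rho /delta.
set phi := fun ab : letter n.+1 p => (ab.1, lift j ab.2).
have Hpb : forall s1 s2, star [seq star [seq gen R a b | b <- s2] | a <- s1] (map phi v)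
   = star [seq star [seq pb phi (gen R a b) | b <- s2] | a <- s1] v.
  move=> s1 s2; rewrite -[LHS]/(pb phi _ v) pb_star -map_comp; congr (star _ v).
  by apply: eq_map => a /=; rewrite pb_star -map_comp.
under eq_bigr => I _ do under eq_bigr => J _ do rewrite Hpb.
apply: big1 => I _.
refine (@toggle_sum0 R _ j (fun J => _) hR _) => J.
have -> : star [seq star [seq pb phi (gen R a b) | b <- enum (toggle j J)] | a <- enum I] v
  = star [seq star [seq pb phi (gen R a b) | b <- enum J] | a <- enum I] v.
  congr (star _ v); apply: eq_map => a; apply: star_toggle.
  apply: funext => u; rewrite /pb /gen /szero.
  case: u => [|x [|y u]] //=; last by rewrite eqseq_cons andbF.
  case: eqP => // [[_ /eqP]]; by rewrite eq_sym (negbTE (neq_lift _ _)).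
rewrite ![(_ - #|I| - _)%N]subnAC.
by rewrite sign_toggle ?mulNr // addnC; apply: leq_add.
Qed.
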